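(* Let $\eta=\pi/3$, $L\ge3$, $1\le i\le L-1$, and $u,x,x_j\in\mathbb{C}$ ($j\ne i,i+1$). Let $s=e_1\otimes e_2-e_2\otimes e_1\in\mathbb{C}^2\otimes\mathbb{C}^2$. Then for every vector $v\in(\mathbb{C}^2)^{\otimes(L-2)}$ (placed on the sites other than $i,i+1$), \[ T_L(u\,|\,x_1,\ldots,x_{i-1},x,x+2\eta,x_{i+2},\ldots,x_L)\,\big(v\otimes s_{i,i+1}\big) = r(x-u)\,r(x+2\eta-u)\ \big(T_{L-2}(u\,|\,x_1,\ldots,x_{i-1},x_{i+2},\ldots,x_L)\,v\big)\otimes s_{i,i+1}, \] where $s_{i,i+1}$ denotes $s$ placed on sites $i,i+1$ and $T_{L-2}$ acts on the sites other than $i,i+1$ (in their induced order).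
   Context: Theta functions with nome $p^2$, where $p=e^{i\pi\tau}$, $\operatorname{Im}\tau>0$: $\theta_1(x;q)=2\sum_{n\ge0}(-1)^nq^{(n+1/2)^2}\sin((2n+1)x)$, $\theta_4(x;q)=1+2\sum_{n\ge1}(-1)^nq^{n^2}\cos(2nx)$, $q=p^2$. Boltzmann weights: $a(x)=\theta_4(2\eta;p^2)\theta_4(x;p^2)\theta_1(x+2\eta;p^2)$, $b(x)=\theta_4(2\eta;p^2)\theta_1(x;p^2)\theta_4(x+2\eta;p^2)$, $c(x)=\theta_1(2\eta;p^2)\theta_4(x;p^2)\theta_4(x+2\eta;p^2)$, $d(x)=\theta_1(2\eta;p^2)\theta_1(x;p^2)\theta_1(x+2\eta;p^2)$, and $r(x)=\theta_4(0;p^2)\theta_1(x+\eta;p^2)\theta_4(x+\eta;p^2)$. $R(x)$ is the operator on $\mathbb{C}^2\otimes\mathbb{C}^2$ whose matrix in the basis $e_1\otimes e_1,e_1\otimes e_2,e_2\otimes e_1,e_2\otimes e_2$ is $\begin{pmatrix}a&0&0&d\\0&b&c&0\\0&c&b&0\\d&0&0&a\end{pmatrix}(x)$. On $\mathbb{C}^2_0\otimes(\mathbb{C}^2)^{\otimes L}$ (auxiliary space $0$ and sites $1,\ldots,L$), $R_{0j}(x)$ denotes $R(x)$ acting on factors $0$ and $j$. The transfer matrix is the operator on $(\mathbb{C}^2)^{\otimes L}$ \[ T_L(u\,|\,x_1,\ldots,x_L)=\operatorname{Tr}_0\big(R_{0L}(x_L-u)\,R_{0,L-1}(x_{L-1}-u)\cdots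 R_{01}(x_1-u)\big), \] (operator composition, so $R_{01}$ is applied first), $\operatorname{Tr}_0$ being the partial trace over the auxiliary space. *)

(* Defs.v *)
From Stdlib Require Import Reals List Bool ClassicalEpsilon.
Import ListNotations.
Open Scope R_scope.

Definition Cplx : Type := (R * R)%type.
Definition RtoC (a : R) : Cplx := (a, 0).
Definition C0 : Cplx := (0, 0).
Definition C1 : Cplx := (1, 0).
Definition Ci : Cplx := (0, 1).
Definition Cadd (z w : Cplx) : Cplx := (fst z + fst w, snd z + snd w).
Definition Copp (z : Cplx) : Cplx := (- fst z, - snd z).
Definition Csub (z w : Cplx) : Cplx := Cadd z (Copp w).
Definition Cmul (z w : Cplx) : Cplx :=
  (fst z * fst w - snd z * snd w, fst z * snd w + snd z * fst w).
Definition Cim (z : Cplx) : R := snd z.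

Definition Cexp (z : Cplx) : Cplx := (exp (fst z) * cos (snd z), exp (fst z) * sin (snd z)).
Definition Csin (z : Cplx) : Cplx :=
  Cmul (Csub (Cexp (Cmul Ci z)) (Cexp (Copp (Cmul Ci z)))) (0, - / 2).
Definition Ccos (z : Cplx) : Cplx :=
  Cmul (Cadd (Cexp (Cmul Ci z)) (Cexp (Copp (Cmul Ci z)))) (/ 2, 0).

(** sum of a complex series: the limit of partial sums (0 if divergent) *)
Fixpoint Cpartial (f : nat -> Cplx) (N : nat) : Cplx :=
  match N with
  | O => f O
  | S k => Cadd (Cpartial f k) (f (S k))
  end.
Definition Cseries_conv (f : nat -> Cplx) (l : Cplx) : Prop :=
  Un_cv (fun N => fst (Cpartial f N)) (fst l) /\
  Un_cv (fun N => snd (Cpartial f N)) (snd l).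
Definition Cseries (f : nat -> Cplx) : Cplx :=
  epsilon (inhabits C0) (fun l => Cseries_conv f l).

Definition sgn (n : nat) : Cplx := RtoC ((-1) ^ n).

(** * Theta functions with nome q = p^2, p = exp(i pi tau).
    q^{(n+1/2)^2} := exp(2 i pi tau (n+1/2)^2), q^{n^2} := exp(2 i pi tau n^2). *)
Definition theta1 (tau x : Cplx) : Cplx :=
  Cmul (RtoC 2) (Cseries (fun n =>
    Cmul (sgn n)
      (Cmul (Cexp (Cmul (Cmul (RtoC (2 * PI * (INR n + /2) ^ 2)) Ci) tau))
            (Csin (Cmul (RtoC (2 * INR n + 1)) x))))).
Definition theta4 (tau x : Cplx) : Cplx :=
  Cadd C1 (Cmul (RtoC 2) (Cseries (fun k =>
    let n := S k in
    Cmul (sgn n)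
      (Cmul (Cexp (Cmul (Cmul (RtoC (2 * PI * (INR n) ^ 2)) Ci) tau))
            (Ccos (Cmul (RtoC (2 * INR n)) x)))))).

Definition eta2 (eta : Cplx) : Cplx := Cadd eta eta.
Definition wa tau eta x := Cmul (theta4 tau (eta2 eta)) (Cmul (theta4 tau x) (theta1 tau (Cadd x (eta2 eta)))).
Definition wb tau eta x := Cmul (theta4 tau (eta2 eta)) (Cmul (theta1 tau x) (theta4 tau (Cadd x (eta2 eta)))).
Definition wc tau eta x := Cmul (theta1 tau (eta2 eta)) (Cmul (theta4 tau x) (theta4 tau (Cadd x (eta2 eta)))).
Definition wd tau eta x := Cmul (theta1 tau (eta2 eta)) (Cmul (theta1 tau x) (theta1 tau (Cadd x (eta2 eta)))).
Definition wr tau eta x := Cmul (theta4 tau C0) (Cmul (theta1 tau (Cadd x eta)) (theta4 tau (Cadd x eta))).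

(** * R-matrix entries. Basis vector e_1 is [false], e_2 is [true].
    Rent x al be ga de = matrix entry of R(x) in row e_al (x) e_be, column e_ga (x) e_de. *)
Definition Rent tau eta (x : Cplx) (al be ga de : bool) : Cplx :=
  if Bool.eqb al ga && Bool.eqb be de then
    (if Bool.eqb al be then wa tau eta x else wb tau eta x)
  else if negb (Bool.eqb al ga) && negb (Bool.eqb be de) then
    (if Bool.eqb al be then wd tau eta x else wc tau eta x)
  else C0.

(** * Vectors in (Cplx^2)^{(x) L}: functions on spin configurations (lists of length L) *)
Fixpoint configs (n : nat) : list (list bool) :=
  match n with
  | O => [[]]
  | S k => flat_map (fun c => [false :: c; true :: c]) (configs k)
  end.
Definition Csum (l : list Cplx) : Cplx := fold_right Cadd C0 l.

(** Monodromy R_{0L}(x_L-u) ... R_{01}(x_1-u) (R_{01} applied first):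
    entry with auxiliary output a', auxiliary input a, site output sg, site input ta. *)
Fixpoint mono tau eta (u : Cplx) (xs : list Cplx) (a' a : bool) (sg ta : list bool) : Cplx :=
  match xs, sg, ta with
  | [], [], [] => if Bool.eqb a' a then C1 else C0
  | y :: ys, s :: sg', t :: ta' =>
      Cadd (Cmul (mono tau eta u ys a' false sg' ta') (Rent tau eta (Csub y u) false s a t))
           (Cmul (mono tau eta u ys a' true sg' ta') (Rent tau eta (Csub y u) true s a t))
  | _, _, _ => C0
  end.

Definition Tent tau eta u xs sg ta : Cplx :=
  Cadd (mono tau eta u xs false false sg ta) (mono tau eta u xs true true sg ta).

Definition Tapply tau eta (L : nat) (u : Cplx) (xs : list Cplx) (v : list bool -> Cplx)
  : list bool -> Cplx :=
  fun sg => Csum (map (fun ta => Cmul (Tent tau eta u xs sg ta) (v ta)) (configs L)).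

Definition singlet (p q : bool) : Cplx :=
  match p, q with
  | false, true => C1
  | true, false => Copp C1
  | _, _ => C0
  end.

(** v (x) s_{i,i+1}: s placed on sites i,i+1 (1-based), v on the other sites *)
Definition ins_singlet (i : nat) (v : list bool -> Cplx) : list bool -> Cplx :=
  fun sg => Cmul (v (firstn (i - 1) sg ++ skipn (i + 1) sg))
                 (singlet (nth (i - 1) sg false) (nth i sg false)).

(** spectral parameters x_1..x_{i-1}, x, x+2eta, x_{i+2}..x_L from the list of the others *)
Definition insert_pair (i : nat) (x y : Cplx) (xs : list Cplx) : list Cplx :=
  firstn (i - 1) xs ++ [x; y] ++ skipn (i - 1) xs.

Definition eta_pi3 : Cplx := RtoC (PI / 3).

(* Main.v *)
Require Import Defs.
From Stdlib Require Import Reals Lra Lia List ZArith ClassicalEpsilon.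
From Coquelicot Require Import Rcomplements Rbar Lim_seq Series Hierarchy.
Import ListNotations.
Open Scope R_scope.

Definition rr : R := exp (-1).
Lemma rr_pos : 0 < rr. Proof. apply exp_pos. Qed.
Lemma rr_lt1 : rr < 1.
Proof. unfold rr. rewrite <- exp_0. apply exp_increasing. lra. Qed.
Lemma rr_abs : Rabs rr < 1.
Proof. rewrite Rabs_pos_eq; [apply rr_lt1| left; apply rr_pos]. Qed.
Lemma rr_pow_pos n : 0 < rr ^ n. Proof. apply pow_lt, rr_pos. Qed.

Lemma rr_pow_le n m : (n <= m)%nat -> rr ^ m <= rr ^ n.
Proof.
  intros H. replace m with (n + (m - n))%nat by lia. rewrite pow_add.
  pose proof (rr_pow_pos n). assert (rr ^ (m - n) <= 1).
  { rewrite <- (pow1 (m - n)). apply pow_incr. pose proof rr_pos; pose proof rr_lt1; lra. }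
  nra.
Qed.

Definition gd (a : nat -> R) (K : R) := forall n, Rabs (a n) <= K * rr ^ n.

Lemma ex_geomK K : ex_series (fun n => K * rr ^ n).
Proof.
  apply (ex_series_scal_l (V:=R_NormedModule) K (fun n => rr ^ n)).
  apply ex_series_geom, rr_abs.
Qed.

Lemma gd_ex a K : gd a K -> ex_series a.
Proof.
  intros H. apply (ex_series_le (V:=R_CompleteNormedModule) a (fun n => K * rr ^ n)).
  - intros n. apply H.
  - apply ex_geomK.
Qed.

Lemma gd_exabs a K : gd a K -> ex_series (fun n => Rabs (a n)).
Proof.
  intros H. apply gd_ex with K. intros n. rewrite Rabs_Rabsolu. apply H.
Qed.

Lemma gd_bound a K : gd a K -> Rabs (Series a) <= K / (1 - rr).
Proof.
  intros H. eapply Rle_trans. apply Series_Rabs, (gd_exabs _ _ H).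
  eapply Rle_trans. apply Series_le with (b := fun n => K * rr ^ n).
  - intros n; split; [apply Rabs_pos| apply H].
  - apply ex_geomK.
  - rewrite Series_scal_l, Series_geom by apply rr_abs. unfold Rdiv. lra.
Qed.

Lemma gd_K_nonneg a K : gd a K -> 0 <= K.
Proof.
  intros H. specialize (H 0%nat). simpl in H. pose proof (Rabs_pos (a 0%nat)). lra.
Qed.

Lemma lim_of_series a : ex_series a -> is_lim_seq (sum_f_R0 a) (Series a).
Proof.
  intros H. apply Series_correct in H. apply is_series_Reals in H.
  apply is_lim_seq_Reals. exact H.
Qed.

Lemma Series_evenodd a K : gd a K ->
  Series a = Series (fun n => a (2 * n)%nat) + Series (fun n => a (S (2 * n))).
Proof.
  intros H.
  assert (K0 := gd_K_nonneg _ _ H).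
  assert (HE : gd (fun n => a (2 * n)%nat) K).
  { intros n. eapply Rle_trans. apply H. apply Rmult_le_compat_l; auto.
    rewrite pow_mult. apply pow_incr. split. left; apply rr_pow_pos.
    simpl. pose proof rr_pos; pose proof rr_lt1. nra. }
  assert (HO : gd (fun n => a (S (2 * n))) K).
  { intros n. eapply Rle_trans. apply H. apply Rmult_le_compat_l; auto.
    apply rr_pow_le; lia. }
  pose proof (lim_of_series _ (gd_ex _ _ H)) as LA.
  pose proof (lim_of_series _ (gd_ex _ _ HE)) as LE.
  pose proof (lim_of_series _ (gd_ex _ _ HO)) as LO.
  pose proof (is_lim_seq_plus' _ _ _ _ LE LO) as LS.
  assert (Hext : forall N, sum_f_R0 (fun n => a (2 * n)%nat) N + sum_f_R0 (fun n => a (S (2 * n))) N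
                 = sum_f_R0 a (S (2 * N))).
  { induction N.
    - simpl. ring.
    - rewrite (tech5 (fun n => a (2 * n)%nat) N), (tech5 (fun n => a (S (2 * n))) N).
      replace (S (2 * S N)) with (S (S (S (2 * N)))) by lia.
      rewrite (tech5 a (S (S (2 * N)))), (tech5 a (S (2 * N))), <- IHN.
      replace (2 * S N)%nat with (S (S (2 * N))) by lia. ring. }
  apply (is_lim_seq_ext _ _ _ Hext) in LS.
  assert (LA' : is_lim_seq (fun N => sum_f_R0 a (S (2 * N))) (Series a)).
  { apply (is_lim_seq_subseq (sum_f_R0 a) (Series a) (fun N => S (2 * N))); auto.
    apply eventually_subseq. intros; lia. }
  apply is_lim_seq_unique in LS. apply is_lim_seq_unique in LA'.
  rewrite LS in LA'. injection LA'. auto.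
Qed.

Lemma Series_sum_fin (F : nat -> nat -> R) (K : R) :
  (forall m n, Rabs (F m n) <= K * rr ^ m * rr ^ n) ->
  forall N, ex_series (fun n => sum_f_R0 (fun m => F m n) N) /\
    Series (fun n => sum_f_R0 (fun m => F m n) N) = sum_f_R0 (fun m => Series (F m)) N.
Proof.
  intros H.
  assert (HF : forall m, gd (F m) (K * rr ^ m)). { intros m n. apply H. }
  induction N as [|N [IH1 IH2]].
  - simpl. split. apply (gd_ex _ _ (HF 0%nat)). reflexivity.
  - simpl. split.
    + apply (ex_series_plus (V:=R_NormedModule) (fun n => sum_f_R0 (fun m => F m n) N) (fun n => F (S N) n)); auto.
      apply (gd_ex _ _ (HF (S N))).
    + rewrite Series_plus; auto. rewrite IH2. reflexivity.
      apply (gd_ex _ _ (HF (S N))).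
Qed.

Lemma Fubini_nat (F : nat -> nat -> R) (K : R) :
  (forall m n, Rabs (F m n) <= K * rr ^ m * rr ^ n) ->
  Series (fun m => Series (F m)) = Series (fun n => Series (fun m => F m n)).
Proof.
  intros H.
  assert (HF : forall m, gd (F m) (K * rr ^ m)). { intros m n. apply H. }
  assert (HF' : forall n, gd (fun m => F m n) (K * rr ^ n)).
  { intros n m. replace (K * rr ^ n * rr ^ m) with (K * rr ^ m * rr ^ n) by ring. apply H. }
  assert (K0 : 0 <= K). { specialize (H 0%nat 0%nat). simpl in H. pose proof (Rabs_pos (F 0%nat 0%nat)). lra. }
  pose proof rr_pos as r0; pose proof rr_lt1 as r1.
  assert (G1 : gd (fun m => Series (F m)) (K / (1 - rr))).
  { intros m. eapply Rle_trans. apply (gd_bound _ _ (HF m)). unfold Rdiv.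
    apply Req_le. ring. }
  pose proof (lim_of_series _ (gd_ex _ _ G1)) as L1.
  set (S2 := Series (fun n => Series (fun m => F m n))).
  assert (L2 : is_lim_seq (sum_f_R0 (fun m => Series (F m))) S2).
  { set (c := K / (1 - rr) / (1 - rr) * rr).
    assert (Hb : forall N, Rabs (S2 - sum_f_R0 (fun m => Series (F m)) N) <= c * rr ^ N).
    { intros N. destruct (Series_sum_fin F K H N) as [E1 E2]. rewrite <- E2.
      unfold S2. rewrite <- Series_minus; auto.
      2:{ apply gd_ex with (K / (1 - rr)). intros n. eapply Rle_trans. apply (gd_bound _ _ (HF' n)).
          unfold Rdiv. apply Req_le. ring. }
      assert (Hd : forall n, Series (fun m => F m n) - sum_f_R0 (fun m => F m n) N
                    = Series (fun k => F (S N + k)%nat n)).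
      { intros n. rewrite (Series_incr_n (fun m => F m n) (S N)); [simpl; ring | lia | apply (gd_ex _ _ (HF' n))]. }
      rewrite (Series_ext _ _ Hd).
      assert (Hg : gd (fun n => Series (fun k => F (S N + k)%nat n)) (K * rr ^ S N / (1 - rr))).
      { intros n. eapply Rle_trans. apply gd_bound with (K := K * rr ^ S N * rr ^ n).
        - intros k. eapply Rle_trans. apply H. rewrite pow_add. apply Req_le. ring.
        - unfold Rdiv. apply Req_le. ring. }
      eapply Rle_trans. apply (gd_bound _ _ Hg). unfold c. simpl. apply Req_le. field. lra. }
    apply is_lim_seq_le_le with (u := fun N => S2 - c * rr ^ N) (w := fun N => S2 + c * rr ^ N).
    - intros N. specialize (Hb N). apply Rabs_le_between' in Hb. lra.
    - assert (Hc : is_lim_seq (fun N => c * rr ^ N) 0).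
      { replace (Finite 0) with (Rbar_mult c 0) by (simpl; f_equal; ring).
        apply is_lim_seq_scal_l, is_lim_seq_geom, rr_abs. }
      replace (Finite S2) with (Finite (S2 - 0)) by (f_equal; ring).
      apply is_lim_seq_minus'. apply is_lim_seq_const. exact Hc.
    - assert (Hc : is_lim_seq (fun N => c * rr ^ N) 0).
      { replace (Finite 0) with (Rbar_mult c 0) by (simpl; f_equal; ring).
        apply is_lim_seq_scal_l, is_lim_seq_geom, rr_abs. }
      replace (Finite S2) with (Finite (S2 + 0)) by (f_equal; ring).
      apply is_lim_seq_plus'. apply is_lim_seq_const. exact Hc. }
  apply is_lim_seq_unique in L1. apply is_lim_seq_unique in L2.
  rewrite L1 in L2. injection L2; auto.
Qed.

Lemma Cplx_eq (a b c d : R) : a = c -> b = d -> (a, b) = (c, d).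
Proof. intros; subst; reflexivity. Qed.

Ltac cunf := unfold Cadd, Cmul, Csub, Copp, C0, Defs.C1, Defs.RtoC, Ci, eta2, eta_pi3 in *.
Ltac ceq := cunf; simpl; apply Cplx_eq; simpl; ring.
Ltac ceqf := cunf; simpl; apply Cplx_eq; simpl; field.

Lemma Cring : ring_theory C0 Defs.C1 Cadd Cmul Csub Copp (@eq Cplx).
Proof.
  constructor; intros; repeat match goal with z : Cplx |- _ => destruct z end; ceq.
Qed.
Add Ring CplxRing : Cring.

Definition Cn (z : Cplx) : R := Rabs (fst z) + Rabs (snd z).

Lemma Cn_pos z : 0 <= Cn z.
Proof. unfold Cn. pose proof (Rabs_pos (fst z)); pose proof (Rabs_pos (snd z)); lra. Qed.

Lemma Cn_mul z w : Cn (Cmul z w) <= Cn z * Cn w.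
Proof.
  destruct z as [a b], w as [c d]. unfold Cn, Cmul; simpl.
  eapply Rle_trans. apply Rplus_le_compat; apply Rabs_triang.
  unfold Rminus. rewrite !Rabs_Ropp, !Rabs_mult.
  apply Req_le. ring.
Qed.

Lemma Cn_add z w : Cn (Cadd z w) <= Cn z + Cn w.
Proof.
  destruct z as [a b], w as [c d]. unfold Cn, Cadd; simpl.
  pose proof (Rabs_triang a c); pose proof (Rabs_triang b d). lra.
Qed.

Definition CS (h : nat -> Cplx) : Cplx :=
  (Series (fun n => fst (h n)), Series (fun n => snd (h n))).

Definition cgd (h : nat -> Cplx) (K : R) := forall n, Cn (h n) <= K * rr ^ n.

Lemma cgd_fst h K : cgd h K -> gd (fun n => fst (h n)) K.
Proof. intros H n. eapply Rle_trans; [|apply H]. unfold Cn. pose proof (Rabs_pos (snd (h n))). lra. Qed.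
Lemma cgd_snd h K : cgd h K -> gd (fun n => snd (h n)) K.
Proof. intros H n. eapply Rle_trans; [|apply H]. unfold Cn. pose proof (Rabs_pos (fst (h n))). lra. Qed.

Lemma CS_ext f g : (forall n, f n = g n) -> CS f = CS g.
Proof.
  intros H. unfold CS. f_equal; apply Series_ext; intros n; rewrite H; auto.
Qed.

Lemma CS_add f g K1 K2 : cgd f K1 -> cgd g K2 ->
  CS (fun n => Cadd (f n) (g n)) = Cadd (CS f) (CS g).
Proof.
  intros H1 H2. unfold CS, Cadd; simpl. f_equal; apply Series_plus;
  eauto using gd_ex, cgd_fst, cgd_snd.
Qed.

Lemma CS_scal c f K : cgd f K -> CS (fun n => Cmul c (f n)) = Cmul c (CS f).
Proof.
  intros H. destruct c as [c1 c2]. unfold CS, Cmul; simpl.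
  pose proof (gd_ex _ _ (cgd_fst _ _ H)). pose proof (gd_ex _ _ (cgd_snd _ _ H)).
  f_equal.
  - rewrite Series_minus.
    + rewrite !Series_scal_l. reflexivity.
    + apply (ex_series_scal_l (V:=R_NormedModule) c1 (fun n => fst (f n))); auto.
    + apply (ex_series_scal_l (V:=R_NormedModule) c2 (fun n => snd (f n))); auto.
  - rewrite Series_plus.
    + rewrite !Series_scal_l. reflexivity.
    + apply (ex_series_scal_l (V:=R_NormedModule) c1 (fun n => snd (f n))); auto.
    + apply (ex_series_scal_l (V:=R_NormedModule) c2 (fun n => fst (f n))); auto.
Qed.

Lemma CS_incr1 f K : cgd f K -> CS f = Cadd (f 0%nat) (CS (fun n => f (S n))).
Proof.
  intros H. unfold CS, Cadd; simpl. f_equal; apply Series_incr_1;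
  eauto using gd_ex, cgd_fst, cgd_snd.
Qed.

Lemma CS_bound f K : cgd f K -> Cn (CS f) <= 2 * K / (1 - rr).
Proof.
  intros H. unfold Cn, CS; simpl.
  pose proof (gd_bound _ _ (cgd_fst _ _ H)). pose proof (gd_bound _ _ (cgd_snd _ _ H)).
  unfold Rdiv in *. lra.
Qed.

Lemma CS_evenodd f K : cgd f K ->
  CS f = Cadd (CS (fun n => f (2 * n)%nat)) (CS (fun n => f (S (2 * n)))).
Proof.
  intros H. unfold CS, Cadd; simpl. f_equal.
  apply (Series_evenodd (fun n => fst (f n)) K), cgd_fst; auto.
  apply (Series_evenodd (fun n => snd (f n)) K), cgd_snd; auto.
Qed.

Lemma CS_fubini (F : nat -> nat -> Cplx) K :
  (forall m n, Cn (F m n) <= K * rr ^ m * rr ^ n) ->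
  CS (fun m => CS (F m)) = CS (fun n => CS (fun m => F m n)).
Proof.
  intros H. unfold CS; simpl. f_equal.
  - apply (Fubini_nat (fun m n => fst (F m n)) K). intros m n.
    eapply Rle_trans; [|apply H]. unfold Cn. pose proof (Rabs_pos (snd (F m n))). lra.
  - apply (Fubini_nat (fun m n => snd (F m n)) K). intros m n.
    eapply Rle_trans; [|apply H]. unfold Cn. pose proof (Rabs_pos (fst (F m n))). lra.
Qed.

(** * bilateral sums *)
Definition w (k : Z) : R := exp (- IZR (Z.abs k)).
Definition pz (n : nat) : Z := Z.of_nat n.
Definition nz (n : nat) : Z := (- Z.of_nat (S n))%Z.

Lemma w_pos k : 0 < w k. Proof. apply exp_pos. Qed.

Lemma exp_nat n : exp (- INR n) = rr ^ n.
Proof.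
  induction n. simpl. rewrite Ropp_0, exp_0. reflexivity.
  rewrite S_INR. simpl. rewrite <- IHn. unfold rr. rewrite <- exp_plus. f_equal. ring.
Qed.

Lemma w_pz n : w (pz n) = rr ^ n.
Proof.
  unfold w, pz. rewrite Z.abs_eq by lia. rewrite <- INR_IZR_INZ. apply exp_nat.
Qed.

Lemma w_nz n : w (nz n) = rr ^ S n.
Proof.
  unfold w, nz. rewrite Z.abs_neq by lia. rewrite Z.opp_involutive.
  rewrite <- INR_IZR_INZ. apply exp_nat.
Qed.

Lemma w_nz_le n : w (nz n) <= rr ^ n.
Proof. rewrite w_nz. apply rr_pow_le. lia. Qed.


Lemma w_mono k l : (Z.abs l <= Z.abs k)%Z -> w k <= w l.
Proof.
  intros H. unfold w. apply IZR_le in H.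
  destruct (Req_dec (IZR (Z.abs l)) (IZR (Z.abs k))) as [E|E].
  rewrite E; lra. left. apply exp_increasing. lra.
Qed.

Lemma w_shift k d : w (k + d) <= exp (IZR (Z.abs d)) * w k.
Proof.
  unfold w. rewrite <- exp_plus.
  assert (H : (Z.abs k <= Z.abs (k + d) + Z.abs d)%Z) by lia.
  apply IZR_le in H. rewrite plus_IZR in H.
  destruct (Req_dec (- IZR (Z.abs (k + d))) (IZR (Z.abs d) + - IZR (Z.abs k))) as [E|E].
  rewrite E; lra. left. apply exp_increasing. lra.
Qed.

Lemma w_tri m d : w m * w (m + d) <= w d.
Proof.
  unfold w. rewrite <- exp_plus.
  assert (H : (Z.abs d <= Z.abs m + Z.abs (m + d))%Z) by lia.
  apply IZR_le in H. rewrite plus_IZR in H.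
  destruct (Req_dec (- IZR (Z.abs m) + - IZR (Z.abs (m + d))) (- IZR (Z.abs d))) as [E|E].
  rewrite E; lra. left. apply exp_increasing. lra.
Qed.

Definition zd (g : Z -> Cplx) (K : R) := forall k, Cn (g k) <= K * w k.

Lemma zd_K g K : zd g K -> 0 <= K.
Proof.
  intros H. specialize (H 0%Z). pose proof (Cn_pos (g 0%Z)). pose proof (w_pos 0).
  destruct (Rle_dec 0 K); auto. nra.
Qed.

Lemma zd_pz g K : zd g K -> cgd (fun n => g (pz n)) K.
Proof. intros H n. rewrite <- w_pz. apply H. Qed.

Lemma zd_nz g K : zd g K -> cgd (fun n => g (nz n)) K.
Proof.
  intros H n. eapply Rle_trans. apply H. apply Rmult_le_compat_l.
  eapply zd_K; eauto. apply w_nz_le.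
Qed.

Definition ZS (g : Z -> Cplx) : Cplx :=
  Cadd (CS (fun n => g (pz n))) (CS (fun n => g (nz n))).

Lemma ZS_ext f g : (forall k, f k = g k) -> ZS f = ZS g.
Proof. intros H. unfold ZS. f_equal; apply CS_ext; auto. Qed.

Lemma zd_add f g K1 K2 : zd f K1 -> zd g K2 -> zd (fun k => Cadd (f k) (g k)) (K1 + K2).
Proof.
  intros H1 H2 k. eapply Rle_trans. apply Cn_add. specialize (H1 k); specialize (H2 k). lra.
Qed.

Lemma zd_scal c f K : zd f K -> zd (fun k => Cmul c (f k)) (Cn c * K).
Proof.
  intros H k. eapply Rle_trans. apply Cn_mul. rewrite Rmult_assoc.
  apply Rmult_le_compat_l. apply Cn_pos. apply H.
Qed.

Lemma zd_ext f g K : (forall k, f k = g k) -> zd f K -> zd g K.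
Proof. intros E H k. rewrite <- E. apply H. Qed.

Lemma ZS_add f g K1 K2 : zd f K1 -> zd g K2 ->
  ZS (fun k => Cadd (f k) (g k)) = Cadd (ZS f) (ZS g).
Proof.
  intros H1 H2. unfold ZS.
  rewrite (CS_add (fun n => f (pz n)) (fun n => g (pz n)) K1 K2) by (apply zd_pz; auto).
  rewrite (CS_add (fun n => f (nz n)) (fun n => g (nz n)) K1 K2) by (apply zd_nz; auto).
  ring.
Qed.

Lemma ZS_scal c f K : zd f K -> ZS (fun k => Cmul c (f k)) = Cmul c (ZS f).
Proof.
  intros H. unfold ZS.
  rewrite (CS_scal c (fun n => f (pz n)) K) by (apply zd_pz; auto).
  rewrite (CS_scal c (fun n => f (nz n)) K) by (apply zd_nz; auto).
  ring.
Qed.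

Lemma ZS_bound f K : zd f K -> Cn (ZS f) <= 4 * K / (1 - rr).
Proof.
  intros H. unfold ZS. eapply Rle_trans. apply Cn_add.
  pose proof (CS_bound _ _ (zd_pz _ _ H)). pose proof (CS_bound _ _ (zd_nz _ _ H)).
  unfold Rdiv in *. lra.
Qed.

Lemma zd_shift g K d : zd g K -> zd (fun k => g (k + d)%Z) (K * exp (IZR (Z.abs d))).
Proof.
  intros H k. eapply Rle_trans. apply H. rewrite Rmult_assoc.
  apply Rmult_le_compat_l. eapply zd_K; eauto. apply w_shift.
Qed.

Lemma ZS_shift1 g K : zd g K -> ZS (fun k => g (k + 1)%Z) = ZS g.
Proof.
  intros H. unfold ZS.
  rewrite (CS_incr1 (fun n => g (pz n)) K) by (apply zd_pz; auto).
  assert (E1 : CS (fun n => g (pz n + 1)%Z) = CS (fun n => g (pz (S n)))).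
  { apply CS_ext. intros n. unfold pz. f_equal. lia. }
  assert (Hh : cgd (fun n => g (- Z.of_nat n)%Z) K).
  { intros n. rewrite <- w_pz. eapply Rle_trans. apply H.
    apply Rmult_le_compat_l. eapply zd_K; eauto. apply w_mono. unfold pz. lia. }
  assert (E2 : CS (fun n => g (nz n + 1)%Z) = Cadd (g 0%Z) (CS (fun n => g (nz n)))).
  { assert (E3 : CS (fun n => g (nz n + 1)%Z) = CS (fun n => g (- Z.of_nat n)%Z)).
    { apply CS_ext. intros n. unfold nz. f_equal. lia. }
    rewrite E3, (CS_incr1 _ K Hh). simpl. f_equal. }
  rewrite E1, E2. replace (pz 0) with 0%Z by reflexivity. ring.
Qed.

Lemma ZS_shift_nat g K (d : nat) : zd g K -> ZS (fun k => g (k + Z.of_nat d)%Z) = ZS g.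
Proof.
  revert g K. induction d; intros g K H.
  - apply ZS_ext. intros k. f_equal. simpl. lia.
  - rewrite <- (IHd g K H).
    rewrite <- (ZS_shift1 (fun k => g (k + Z.of_nat d)%Z) _ (zd_shift g K (Z.of_nat d) H)).
    apply ZS_ext. intros k. f_equal. lia.
Qed.

Lemma ZS_shift g K d : zd g K -> ZS (fun k => g (k + d)%Z) = ZS g.
Proof.
  intros H. destruct (Z_le_gt_dec 0 d) as [Hd|Hd].
  - rewrite <- (Z2Nat.id d Hd). apply (ZS_shift_nat g K); auto.
  - pose proof (zd_shift g K d H) as H'.
    rewrite <- (ZS_shift_nat _ _ (Z.to_nat (- d)) H').
    apply ZS_ext. intros k. f_equal. rewrite Z2Nat.id by lia. lia.
Qed.

Lemma ZS_evenodd g K : zd g K ->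
  ZS g = Cadd (ZS (fun k => g (2 * k)%Z)) (ZS (fun k => g (2 * k + 1)%Z)).
Proof.
  intros H. unfold ZS.
  rewrite (CS_evenodd (fun n => g (pz n)) K) by (apply zd_pz; auto).
  rewrite (CS_evenodd (fun n => g (nz n)) K) by (apply zd_nz; auto).
  assert (E1 : CS (fun n => g (pz (2 * n))) = CS (fun n => g (2 * pz n)%Z))
    by (apply CS_ext; intros n; unfold pz; f_equal; lia).
  assert (E2 : CS (fun n => g (pz (S (2 * n)))) = CS (fun n => g (2 * pz n + 1)%Z))
    by (apply CS_ext; intros n; unfold pz; f_equal; lia).
  assert (E3 : CS (fun n => g (nz (2 * n))) = CS (fun n => g (2 * nz n + 1)%Z))
    by (apply CS_ext; intros n; unfold nz; f_equal; lia).
  assert (E4 : CS (fun n => g (nz (S (2 * n)))) = CS (fun n => g (2 * nz n)%Z))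
    by (apply CS_ext; intros n; unfold nz; f_equal; lia).
  rewrite E1, E2, E3, E4. ring.
Qed.

Definition zd2 (F : Z -> Z -> Cplx) (K : R) := forall m n, Cn (F m n) <= K * w m * w n.

Lemma zd2_K F K : zd2 F K -> 0 <= K.
Proof.
  intros H. specialize (H 0%Z 0%Z). pose proof (Cn_pos (F 0%Z 0%Z)). pose proof (w_pos 0).
  rewrite Rmult_assoc in H. assert (0 < w 0 * w 0) by nra.
  destruct (Rle_dec 0 K); auto. nra.
Qed.

Lemma ZS_double_expand F K : zd2 F K ->
  ZS (fun m => ZS (F m)) =
  Cadd (Cadd (CS (fun m => CS (fun n => F (pz m) (pz n)))) (CS (fun m => CS (fun n => F (pz m) (nz n)))))
       (Cadd (CS (fun m => CS (fun n => F (nz m) (pz n)))) (CS (fun m => CS (fun n => F (nz m) (nz n))))).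
Proof.
  intros H. pose proof (zd2_K _ _ H) as K0.
  assert (HP : forall m, cgd (fun n => F m (pz n)) (K * w m)).
  { intros m n. rewrite <- w_pz. apply H. }
  assert (HN : forall m, cgd (fun n => F m (nz n)) (K * w m)).
  { intros m n. eapply Rle_trans. apply H. apply Rmult_le_compat_l.
    pose proof (w_pos m); nra. apply w_nz_le. }
  assert (ZP : zd (fun m => CS (fun n => F m (pz n))) (2 * K / (1 - rr))).
  { intros m. eapply Rle_trans. apply (CS_bound _ _ (HP m)). unfold Rdiv. apply Req_le. ring. }
  assert (ZN : zd (fun m => CS (fun n => F m (nz n))) (2 * K / (1 - rr))).
  { intros m. eapply Rle_trans. apply (CS_bound _ _ (HN m)). unfold Rdiv. apply Req_le. ring. }
  unfold ZS at 2. rewrite (ZS_add _ _ _ _ ZP ZN). unfold ZS. ring.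
Qed.

Lemma ZS_fubini F K : zd2 F K ->
  ZS (fun m => ZS (F m)) = ZS (fun n => ZS (fun m => F m n)).
Proof.
  intros H. pose proof (zd2_K _ _ H) as K0.
  assert (H' : zd2 (fun n m => F m n) K).
  { intros n m. replace (K * w n * w m) with (K * w m * w n) by ring. apply H. }
  rewrite (ZS_double_expand _ _ H), (ZS_double_expand _ _ H').
  assert (B : forall (a b : nat -> Z), (forall n, w (a n) <= rr ^ n) -> (forall n, w (b n) <= rr ^ n) ->
     forall m n, Cn (F (a m) (b n)) <= K * rr ^ m * rr ^ n).
  { intros a b Ha Hb m n. eapply Rle_trans. apply H.
    pose proof (w_pos (a m)); pose proof (w_pos (b n)).
    apply Rmult_le_compat. nra. lra. apply Rmult_le_compat_l; auto. auto. }
  assert (Pz : forall n, w (pz n) <= rr ^ n) by (intros; rewrite w_pz; lra).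
  pose proof w_nz_le as Nz.
  rewrite (CS_fubini _ K (B pz pz Pz Pz)), (CS_fubini _ K (B pz nz Pz Nz)),
          (CS_fubini _ K (B nz pz Nz Pz)), (CS_fubini _ K (B nz nz Nz Nz)).
  ring.
Qed.

Lemma Cexp_add p q : Cexp (Cadd p q) = Cmul (Cexp p) (Cexp q).
Proof.
  destruct p as [a b], q as [c d]. unfold Cexp, Cadd, Cmul; simpl.
  rewrite exp_plus, cos_plus, sin_plus. apply Cplx_eq; ring.
Qed.

Lemma Cexp_0 : Cexp (0, 0) = Defs.C1.
Proof. unfold Cexp; simpl. rewrite exp_0, cos_0, sin_0. unfold Defs.C1. apply Cplx_eq; ring. Qed.

Lemma exp_le_mono x y : x <= y -> exp x <= exp y.
Proof. intros [H|H]. left; apply exp_increasing; auto. subst; lra. Qed.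

Lemma Cn_Cexp z : Cn (Cexp z) <= 2 * exp (fst z).
Proof.
  destruct z as [a b]. unfold Cn, Cexp; simpl. rewrite !Rabs_mult.
  rewrite (Rabs_pos_eq (exp a)) by (left; apply exp_pos).
  pose proof (exp_pos a). pose proof (COS_bound b). pose proof (SIN_bound b).
  assert (Rabs (cos b) <= 1) by (apply Rabs_le; lra).
  assert (Rabs (sin b) <= 1) by (apply Rabs_le; lra). nra.
Qed.

Lemma cos_2kpi k : cos (2 * IZR k * PI) = 1.
Proof.
  destruct (Z_le_gt_dec 0 k) as [H|H].
  - rewrite <- (Z2Nat.id k H). rewrite <- INR_IZR_INZ.
    replace (2 * INR (Z.to_nat k) * PI) with (0 + 2 * INR (Z.to_nat k) * PI) by ring.
    rewrite cos_period. apply cos_0.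
  - replace k with (- Z.of_nat (Z.to_nat (- k)))%Z by (rewrite Z2Nat.id; lia).
    rewrite opp_IZR, <- INR_IZR_INZ.
    replace (2 * - INR (Z.to_nat (- k)) * PI) with (- (0 + 2 * INR (Z.to_nat (- k)) * PI)) by ring.
    rewrite cos_neg, cos_period. apply cos_0.
Qed.

Lemma sin_2kpi k : sin (2 * IZR k * PI) = 0.
Proof.
  destruct (Z_le_gt_dec 0 k) as [H|H].
  - rewrite <- (Z2Nat.id k H). rewrite <- INR_IZR_INZ.
    replace (2 * INR (Z.to_nat k) * PI) with (0 + 2 * INR (Z.to_nat k) * PI) by ring.
    rewrite sin_period. apply sin_0.
  - replace k with (- Z.of_nat (Z.to_nat (- k)))%Z by (rewrite Z2Nat.id; lia).
    rewrite opp_IZR, <- INR_IZR_INZ.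
    replace (2 * - INR (Z.to_nat (- k)) * PI) with (- (0 + 2 * INR (Z.to_nat (- k)) * PI)) by ring.
    rewrite sin_neg, sin_period, sin_0. ring.
Qed.

(** * Gaussian terms *)
Definition gk (T : Cplx) (a : R) (z : Cplx) (k : Z) : Cplx :=
  Cexp (- (PI * (IZR k + a) ^ 2 * snd T) - 2 * (IZR k + a) * snd z,
        PI * (IZR k + a) ^ 2 * fst T + 2 * (IZR k + a) * fst z).

Definition G T a z := ZS (gk T a z).

Lemma quad_bound c B X : 0 < c -> - c * X ^ 2 + B * X <= B ^ 2 / (4 * c).
Proof.
  intros Hc.
  assert (E : B ^ 2 / (4 * c) - (- c * X ^ 2 + B * X) = (2 * c * X - B) ^ 2 / (4 * c)) by (field; lra).
  assert (0 <= (2 * c * X - B) ^ 2 / (4 * c)).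
  { unfold Rdiv. apply Rmult_le_pos. apply pow2_ge_0. left; apply Rinv_0_lt_compat; lra. }
  lra.
Qed.

Lemma gk_bound T a z : 0 < snd T ->
  exists K, forall k, Cn (gk T a z k) <= K * w k * w k.
Proof.
  intros HT. set (c := PI * snd T). assert (Hc : 0 < c) by (unfold c; pose proof PI_RGT_0; nra).
  set (B := 2 * Rabs (snd z) + 2).
  exists (2 * exp (B ^ 2 / (4 * c) + 2 * Rabs a)).
  intros k. eapply Rle_trans. apply Cn_Cexp. simpl fst.
  unfold w. rewrite !Rmult_assoc, <- !exp_plus. apply Rmult_le_compat_l. lra.
  apply exp_le_mono. rewrite abs_IZR.
  set (t := IZR k + a).
  assert (Hk : Rabs (IZR k) <= Rabs t + Rabs a).
  { replace (IZR k) with (t + - a) by (unfold t; ring).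
    eapply Rle_trans. apply Rabs_triang. rewrite Rabs_Ropp. lra. }
  assert (H1 : - (2 * t * snd z) <= 2 * Rabs (snd z) * Rabs t).
  { assert (Rabs (t * snd z) = Rabs t * Rabs (snd z)) by apply Rabs_mult.
    pose proof (Rabs_maj2 (t * snd z)). nra. }
  assert (H2 : t ^ 2 = Rabs t ^ 2) by (simpl; rewrite !Rmult_1_r; rewrite <- Rabs_mult; symmetry; apply Rabs_pos_eq; nra).
  pose proof (quad_bound c B (Rabs t) Hc).
  replace (- (PI * (t * (t * (1 * snd T)))) - 2 * (t * snd z)) with (- c * t ^ 2 - 2 * t * snd z) by (unfold c; ring).
  rewrite H2 in *. unfold B in *. nra.
Qed.

Lemma w_le1 k : w k <= 1.
Proof. unfold w. rewrite <- exp_0. apply exp_le_mono. pose proof (IZR_le 0 _ (Z.abs_nonneg k)). lra. Qed.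

Lemma gk_zd T a z : 0 < snd T -> exists K, zd (gk T a z) K.
Proof.
  intros HT. destruct (gk_bound T a z HT) as [K HK]. exists K. intros k.
  eapply Rle_trans. apply HK. pose proof (w_pos k); pose proof (w_le1 k).
  assert (0 <= K). { specialize (HK k). pose proof (Cn_pos (gk T a z k)). rewrite Rmult_assoc in HK.
    assert (0 < w k * w k) by nra. destruct (Rle_dec 0 K); auto; nra. }
  rewrite Rmult_assoc. apply Rmult_le_compat_l; auto. nra.
Qed.

Ltac zr := repeat (rewrite ?plus_IZR, ?mult_IZR, ?opp_IZR, ?minus_IZR).

Lemma gk_shift1 T a z k : gk T (a + 1) z k = gk T a z (k + 1)%Z.
Proof. unfold gk. zr. f_equal. apply Cplx_eq; ring. Qed.

Lemma G_shift1 T a z : 0 < snd T -> G T (a + 1) z = G T a z.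
Proof.
  intros HT. destruct (gk_zd T a z HT) as [K HK]. unfold G.
  rewrite (ZS_ext _ (fun k => gk T a z (k + 1)%Z)) by (intros; apply gk_shift1).
  apply (ZS_shift _ K 1 HK).
Qed.

Lemma Cexp_2kpi k : Cexp (0, 2 * IZR k * PI) = Defs.C1.
Proof. unfold Cexp; simpl. rewrite exp_0, cos_2kpi, sin_2kpi. unfold Defs.C1. apply Cplx_eq; ring. Qed.

Lemma gk_pi T a z k : gk T a (Cadd z (PI, 0)) k = Cmul (Cexp (0, 2 * a * PI)) (gk T a z k).
Proof.
  unfold gk. rewrite <- Cexp_add.
  transitivity (Cexp (Cadd (Cadd (0, 2 * a * PI)
     (- (PI * (IZR k + a) ^ 2 * snd T) - 2 * (IZR k + a) * snd z,
        PI * (IZR k + a) ^ 2 * fst T + 2 * (IZR k + a) * fst z)) (0, 2 * IZR k * PI))).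
  { f_equal. unfold Cadd; simpl. apply Cplx_eq; ring. }
  rewrite Cexp_add, Cexp_2kpi. ring.
Qed.

Lemma G_pi T a z : 0 < snd T -> G T a (Cadd z (PI, 0)) = Cmul (Cexp (0, 2 * a * PI)) (G T a z).
Proof.
  intros HT. destruct (gk_zd T a z HT) as [K HK]. unfold G.
  rewrite (ZS_ext _ (fun k => Cmul (Cexp (0, 2 * a * PI)) (gk T a z k))) by (intros; apply gk_pi).
  apply (ZS_scal _ _ K HK).
Qed.

Lemma gk_shearA T a u v m l :
  Cmul (gk T a u m) (gk T a v (m + 2 * l)%Z) =
  Cmul (gk (Cadd T T) 0 (Csub v u) l) (gk (Cadd T T) a (Cadd u v) (m + l)%Z).
Proof.
  unfold gk. rewrite <- !Cexp_add. f_equal. unfold Csub, Copp, Cadd; cbn [fst snd]. zr.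
  apply Cplx_eq; ring.
Qed.

Lemma gk_shearB T a u v m l :
  Cmul (gk T a u m) (gk T a v (m + (2 * l + 1))%Z) =
  Cmul (gk (Cadd T T) (/2) (Csub v u) l) (gk (Cadd T T) (a + /2) (Cadd u v) (m + l)%Z).
Proof.
  unfold gk. rewrite <- !Cexp_add. f_equal. unfold Csub, Copp, Cadd; cbn [fst snd]. zr.
  apply Cplx_eq; field.
Qed.

Lemma TT_pos T : 0 < snd T -> 0 < snd (Cadd T T).
Proof. unfold Cadd; simpl; lra. Qed.

Lemma G_shifted_scal T a z c l : 0 < snd T ->
  ZS (fun m => Cmul c (gk T a z (m + l)%Z)) = Cmul c (G T a z).
Proof.
  intros HT. destruct (gk_zd T a z HT) as [K HK].
  rewrite (ZS_scal c _ _ (zd_shift _ _ l HK)). f_equal. apply (ZS_shift _ K l HK).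
Qed.

Lemma shear T a u v : 0 < snd T ->
  Cmul (G T a u) (G T a v) =
  Cadd (Cmul (G (Cadd T T) a (Cadd u v)) (G (Cadd T T) 0 (Csub v u)))
       (Cmul (G (Cadd T T) (a + /2) (Cadd u v)) (G (Cadd T T) (/2) (Csub v u))).
Proof.
  intros HT. pose proof (TT_pos T HT) as HT2.
  destruct (gk_bound T a u HT) as [Ku HKu]. destruct (gk_bound T a v HT) as [Kv HKv].
  destruct (gk_zd T a u HT) as [Ku' HKu']. destruct (gk_zd T a v HT) as [Kv' HKv'].
  assert (Ku0 : 0 <= Ku).
  { specialize (HKu 0%Z). pose proof (Cn_pos (gk T a u 0)). pose proof (w_pos 0). rewrite Rmult_assoc in HKu.
    assert (0 < w 0 * w 0) by nra. destruct (Rle_dec 0 Ku); auto; nra. }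
  assert (Kv0 : 0 <= Kv).
  { specialize (HKv 0%Z). pose proof (Cn_pos (gk T a v 0)). pose proof (w_pos 0). rewrite Rmult_assoc in HKv.
    assert (0 < w 0 * w 0) by nra. destruct (Rle_dec 0 Kv); auto; nra. }
  set (F := fun m d => Cmul (gk T a u m) (gk T a v (m + d)%Z)).
  assert (S1 : Cmul (G T a u) (G T a v) = ZS (fun m => ZS (F m))).
  { unfold G. rewrite (Cring.(Rmul_comm) (ZS (gk T a u))).
    rewrite <- (ZS_scal _ _ _ HKu').
    apply ZS_ext. intros m. rewrite (Cring.(Rmul_comm)).
    rewrite <- (ZS_scal _ _ _ HKv').
    rewrite <- (ZS_shift _ _ m (zd_scal (gk T a u m) _ _ HKv')).
    apply ZS_ext. intros d. unfold F. f_equal. f_equal. lia. }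
  assert (Z2 : zd2 F (Ku * Kv)).
  { intros m d. unfold F. eapply Rle_trans. apply Cn_mul.
    eapply Rle_trans. apply Rmult_le_compat. apply Cn_pos. apply Cn_pos. apply HKu. apply HKv.
    pose proof (w_tri m d). pose proof (w_pos m); pose proof (w_pos d); pose proof (w_pos (m + d)).
    pose proof (w_le1 (m + d)). pose proof (w_le1 m).
    replace (Ku * w m * w m * (Kv * w (m + d) * w (m + d))) with
      ((Ku * Kv * w m) * ((w m * w (m + d)) * w (m + d))) by ring.
    apply Rmult_le_compat_l. apply Rmult_le_pos; [apply Rmult_le_pos; auto|lra].
    assert (w m * w (m + d) * w (m + d) <= w m * w (m + d)).
    { rewrite <- (Rmult_1_r (w m * w (m + d))) at 2. apply Rmult_le_compat_l; nra. }
    lra. }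
  rewrite S1, (ZS_fubini _ _ Z2).
  assert (ZH : zd (fun d => ZS (fun m => F m d)) (4 * (Ku * Kv) / (1 - rr))).
  { intros d. eapply Rle_trans. apply (ZS_bound _ (Ku * Kv * w d)).
    intros m. eapply Rle_trans. apply Z2. apply Req_le; ring.
    unfold Rdiv. apply Req_le; ring. }
  rewrite (ZS_evenodd _ _ ZH).
  destruct (gk_zd (Cadd T T) 0 (Csub v u) HT2) as [K0 HK0].
  destruct (gk_zd (Cadd T T) (/2) (Csub v u) HT2) as [K1 HK1].
  f_equal.
  - rewrite (ZS_ext _ (fun l => Cmul (G (Cadd T T) a (Cadd u v)) (gk (Cadd T T) 0 (Csub v u) l))).
    + apply (ZS_scal _ _ _ HK0).
    + intros l. rewrite (ZS_ext _ (fun m => Cmul (gk (Cadd T T) 0 (Csub v u) l) (gk (Cadd T T) a (Cadd u v) (m + l)%Z))).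
      * rewrite G_shifted_scal by auto. ring.
      * intros m. unfold F. apply gk_shearA.
  - rewrite (ZS_ext _ (fun l => Cmul (G (Cadd T T) (a + /2) (Cadd u v)) (gk (Cadd T T) (/2) (Csub v u) l))).
    + apply (ZS_scal _ _ _ HK1).
    + intros l. rewrite (ZS_ext _ (fun m => Cmul (gk (Cadd T T) (/2) (Csub v u) l) (gk (Cadd T T) (a + /2) (Cadd u v) (m + l)%Z))).
      * rewrite G_shifted_scal by auto. ring.
      * intros m. unfold F. apply gk_shearB.
Qed.

Lemma Cpartial_fst f N : fst (Cpartial f N) = sum_f_R0 (fun n => fst (f n)) N.
Proof. induction N; simpl; auto. rewrite IHN. reflexivity. Qed.
Lemma Cpartial_snd f N : snd (Cpartial f N) = sum_f_R0 (fun n => snd (f n)) N.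
Proof. induction N; simpl; auto. rewrite IHN. reflexivity. Qed.

Lemma Cseries_CS f K : cgd f K -> Cseries f = CS f.
Proof.
  intros H.
  assert (HC : Cseries_conv f (CS f)).
  { split.
    - apply is_lim_seq_Reals. eapply is_lim_seq_ext.
      intros n; symmetry; apply Cpartial_fst.
      apply lim_of_series. eapply gd_ex, cgd_fst, H.
    - apply is_lim_seq_Reals. eapply is_lim_seq_ext.
      intros n; symmetry; apply Cpartial_snd.
      apply lim_of_series. eapply gd_ex, cgd_snd, H. }
  assert (HE : Cseries_conv f (Cseries f)).
  { unfold Cseries. apply epsilon_spec. exists (CS f). exact HC. }
  destruct HC as [H1 H2], HE as [H3 H4]. destruct (Cseries f) as [p q]. unfold CS.
  f_equal; eapply UL_sequence; eauto.
Qed.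

Lemma cgd_ext f g K : (forall n, f n = g n) -> cgd f K -> cgd g K.
Proof. intros E H n. rewrite <- E. apply H. Qed.
Lemma cgd_add f g K1 K2 : cgd f K1 -> cgd g K2 -> cgd (fun n => Cadd (f n) (g n)) (K1 + K2).
Proof. intros H1 H2 n. eapply Rle_trans. apply Cn_add. specialize (H1 n); specialize (H2 n). lra. Qed.
Lemma cgd_scal c f K : cgd f K -> cgd (fun n => Cmul c (f n)) (Cn c * K).
Proof. intros H n. eapply Rle_trans. apply Cn_mul. rewrite Rmult_assoc.
  apply Rmult_le_compat_l. apply Cn_pos. apply H. Qed.

Lemma cos_npi n : cos (INR n * PI) = (-1) ^ n.
Proof.
  induction n. simpl. rewrite Rmult_0_l, cos_0. auto.
  rewrite S_INR. replace ((INR n + 1) * PI) with (INR n * PI + PI) by ring.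
  rewrite neg_cos, IHn. simpl. ring.
Qed.
Lemma sin_npi n : sin (INR n * PI) = 0.
Proof.
  induction n. simpl. rewrite Rmult_0_l, sin_0. auto.
  rewrite S_INR. replace ((INR n + 1) * PI) with (INR n * PI + PI) by ring.
  rewrite neg_sin, IHn. ring.
Qed.
Lemma cos_nhpi n : cos ((INR n + /2) * PI) = 0.
Proof.
  replace ((INR n + /2) * PI) with (PI / 2 + INR n * PI) by field.
  rewrite cos_plus, cos_PI2, sin_npi. ring.
Qed.
Lemma sin_nhpi n : sin ((INR n + /2) * PI) = (-1) ^ n.
Proof.
  replace ((INR n + /2) * PI) with (PI / 2 + INR n * PI) by field.
  rewrite sin_plus, sin_PI2, cos_npi, sin_npi. ring.
Qed.

Lemma Cexp_im y : Cexp (0, y) = (cos y, sin y).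
Proof. unfold Cexp; simpl. rewrite exp_0. apply Cplx_eq; ring. Qed.

Definition hpi : Cplx := (PI / 2, 0).

Lemma IZR_pz n : IZR (pz n) = INR n.
Proof. unfold pz. symmetry. apply INR_IZR_INZ. Qed.
Lemma IZR_nz n : IZR (nz n) = - (INR n + 1).
Proof. unfold nz. rewrite opp_IZR, <- INR_IZR_INZ, S_INR. reflexivity. Qed.

Lemma theta1_term tau x n :
  Cadd (gk (Cadd tau tau) (/2) (Cadd x hpi) (pz n)) (gk (Cadd tau tau) (/2) (Cadd x hpi) (nz n)) =
  Cmul (-2, 0) (Cmul (sgn n)
      (Cmul (Cexp (Cmul (Cmul (Defs.RtoC (2 * PI * (INR n + /2) ^ 2)) Ci) tau))
            (Csin (Cmul (Defs.RtoC (2 * INR n + 1)) x)))).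
Proof.
  set (E1 := Cmul (Cmul (Defs.RtoC (2 * PI * (INR n + /2) ^ 2)) Ci) tau).
  set (z := Cmul (Defs.RtoC (2 * INR n + 1)) x).
  assert (P : gk (Cadd tau tau) (/2) (Cadd x hpi) (pz n) =
     Cmul (Cmul (Cexp E1) (Cexp (Cmul Ci z))) (Cexp (0, (INR n + /2) * PI))).
  { rewrite <- !Cexp_add. unfold gk. f_equal. rewrite IZR_pz. unfold E1, z, hpi.
    unfold Cadd, Cmul, Ci, Defs.RtoC; cbn [fst snd]. apply Cplx_eq; field. }
  assert (N : gk (Cadd tau tau) (/2) (Cadd x hpi) (nz n) =
     Cmul (Cmul (Cexp E1) (Cexp (Copp (Cmul Ci z)))) (Cexp (0, - ((INR n + /2) * PI)))).
  { rewrite <- !Cexp_add. unfold gk. f_equal. rewrite IZR_nz. unfold E1, z, hpi.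
    unfold Cadd, Copp, Cmul, Ci, Defs.RtoC; cbn [fst snd]. apply Cplx_eq; field. }
  rewrite P, N. unfold Csin. clearbody E1 z.
  rewrite !Cexp_im. rewrite cos_neg, sin_neg, cos_nhpi, sin_nhpi.
  destruct (Cexp E1) as [a1 a2]. destruct (Cexp (Cmul Ci z)) as [b1 b2].
  destruct (Cexp (Copp (Cmul Ci z))) as [c1 c2].
  unfold sgn, Csub, Copp, Cadd, Cmul, Defs.RtoC; cbn [fst snd]. apply Cplx_eq; field.
Qed.

Lemma theta1_G tau x : 0 < snd tau ->
  theta1 tau x = Copp (G (Cadd tau tau) (/2) (Cadd x hpi)).
Proof.
  intros HT. pose proof (TT_pos _ HT) as HT2.
  destruct (gk_zd (Cadd tau tau) (/2) (Cadd x hpi) HT2) as [K HK].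
  set (t := fun n => Cmul (sgn n)
      (Cmul (Cexp (Cmul (Cmul (Defs.RtoC (2 * PI * (INR n + /2) ^ 2)) Ci) tau))
            (Csin (Cmul (Defs.RtoC (2 * INR n + 1)) x)))).
  set (g := gk (Cadd tau tau) (/2) (Cadd x hpi)).
  assert (Ht : forall n, t n = Cmul (-/2, 0) (Cadd (g (pz n)) (g (nz n)))).
  { intros n. unfold g. rewrite theta1_term. fold (t n). destruct (t n). unfold Cmul; cbn [fst snd].
    apply Cplx_eq; field. }
  assert (Hs : cgd (fun n => Cadd (g (pz n)) (g (nz n))) (K + K)).
  { apply cgd_add; [apply zd_pz|apply zd_nz]; auto. }
  assert (Hgt : cgd t (Cn (-/2, 0) * (K + K))).
  { eapply cgd_ext. intros n; symmetry; apply Ht. apply cgd_scal. auto. }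
  unfold theta1. fold t. rewrite (Cseries_CS _ _ Hgt).
  rewrite (CS_ext _ _ Ht), (CS_scal _ _ _ Hs), (CS_add _ _ K K); try (apply zd_pz || apply zd_nz); auto.
  unfold G, ZS. fold g. destruct (CS (fun n => g (pz n))), (CS (fun n => g (nz n))).
  unfold Copp, Cadd, Cmul, Defs.RtoC; cbn [fst snd]. apply Cplx_eq; field.
Qed.

Lemma theta4_term tau x n :
  Cadd (gk (Cadd tau tau) 0 (Cadd x hpi) (pz (S n))) (gk (Cadd tau tau) 0 (Cadd x hpi) (nz n)) =
  Cmul (2, 0) (Cmul (sgn (S n))
      (Cmul (Cexp (Cmul (Cmul (Defs.RtoC (2 * PI * (INR (S n)) ^ 2)) Ci) tau))
            (Ccos (Cmul (Defs.RtoC (2 * INR (S n))) x)))).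
Proof.
  set (E1 := Cmul (Cmul (Defs.RtoC (2 * PI * (INR (S n)) ^ 2)) Ci) tau).
  set (z := Cmul (Defs.RtoC (2 * INR (S n))) x).
  assert (P : gk (Cadd tau tau) 0 (Cadd x hpi) (pz (S n)) =
     Cmul (Cmul (Cexp E1) (Cexp (Cmul Ci z))) (Cexp (0, INR (S n) * PI))).
  { rewrite <- !Cexp_add. unfold gk. f_equal. rewrite IZR_pz. unfold E1, z, hpi.
    unfold Cadd, Cmul, Ci, Defs.RtoC; cbn [fst snd]. apply Cplx_eq; field. }
  assert (N : gk (Cadd tau tau) 0 (Cadd x hpi) (nz n) =
     Cmul (Cmul (Cexp E1) (Cexp (Copp (Cmul Ci z)))) (Cexp (0, - (INR (S n) * PI)))).
  { rewrite <- !Cexp_add. unfold gk. f_equal. rewrite IZR_nz. unfold E1, z, hpi. rewrite S_INR.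
    unfold Cadd, Copp, Cmul, Ci, Defs.RtoC; cbn [fst snd]. apply Cplx_eq; field. }
  rewrite P, N. unfold Ccos. clearbody E1 z.
  rewrite !Cexp_im. rewrite cos_neg, sin_neg, cos_npi, sin_npi.
  destruct (Cexp E1) as [a1 a2]. destruct (Cexp (Cmul Ci z)) as [b1 b2].
  destruct (Cexp (Copp (Cmul Ci z))) as [c1 c2].
  unfold sgn, Csub, Copp, Cadd, Cmul, Defs.RtoC; cbn [fst snd]. apply Cplx_eq; field.
Qed.

Lemma theta4_G tau x : 0 < snd tau ->
  theta4 tau x = G (Cadd tau tau) 0 (Cadd x hpi).
Proof.
  intros HT. pose proof (TT_pos _ HT) as HT2.
  destruct (gk_zd (Cadd tau tau) 0 (Cadd x hpi) HT2) as [K HK].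
  set (t := fun k => let n := S k in Cmul (sgn n)
      (Cmul (Cexp (Cmul (Cmul (Defs.RtoC (2 * PI * (INR n) ^ 2)) Ci) tau))
            (Ccos (Cmul (Defs.RtoC (2 * INR n)) x)))).
  set (g := gk (Cadd tau tau) 0 (Cadd x hpi)).
  assert (Ht : forall n, t n = Cmul (/2, 0) (Cadd (g (pz (S n))) (g (nz n)))).
  { intros n. unfold g. rewrite theta4_term. unfold t. cbv zeta.
    match goal with |- ?a = _ => destruct a end. unfold Cmul; cbn [fst snd].
    apply Cplx_eq; field. }
  assert (K0 : 0 <= K) by (eapply zd_K; eauto).
  assert (HP1 : cgd (fun n => g (pz (S n))) K).
  { intros n. eapply Rle_trans. apply HK. rewrite w_pz. apply Rmult_le_compat_l; auto.
    apply rr_pow_le. lia. }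
  assert (Hs : cgd (fun n => Cadd (g (pz (S n))) (g (nz n))) (K + K)).
  { apply cgd_add; auto. apply zd_nz; auto. }
  assert (Hgt : cgd t (Cn (/2, 0) * (K + K))).
  { eapply cgd_ext. intros n; symmetry; apply Ht. apply cgd_scal. auto. }
  unfold theta4. fold t. rewrite (Cseries_CS _ _ Hgt).
  rewrite (CS_ext _ _ Ht), (CS_scal _ _ _ Hs), (CS_add _ _ K K); try (apply zd_nz); auto.
  unfold G, ZS. fold g. rewrite (CS_incr1 (fun n => g (pz n)) K) by (apply zd_pz; auto).
  assert (g0 : g (pz 0) = Defs.C1).
  { unfold g, gk. rewrite IZR_pz. simpl INR. rewrite <- Cexp_0. f_equal.
    apply Cplx_eq; ring. }
  rewrite g0.
  destruct (CS (fun n => g (pz (S n)))), (CS (fun n => g (nz n))).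
  unfold Defs.C1, Cadd, Cmul, Defs.RtoC; cbn [fst snd]. apply Cplx_eq; field.
Qed.

(** * theta identities *)
Lemma Cexp_pi0 : Cexp (0, 2 * 0 * PI) = Defs.C1.
Proof. rewrite Cexp_im. replace (2 * 0 * PI) with 0 by ring. rewrite cos_0, sin_0. reflexivity. Qed.
Lemma Cexp_pih : Cexp (0, 2 * / 2 * PI) = Copp Defs.C1.
Proof. rewrite Cexp_im. replace (2 * / 2 * PI) with PI by field. rewrite cos_PI, sin_PI.
  unfold Copp, Defs.C1; simpl. apply Cplx_eq; ring. Qed.

Section Th.
Variable tau : Cplx.
Hypothesis Htau : 0 < snd tau.
Let T1 := Cadd tau tau.
Let T2 := Cadd T1 T1.
Let HT1 : 0 < snd T1 := TT_pos _ Htau.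
Let HT2 : 0 < snd T2 := TT_pos _ HT1.

Lemma th1_pi s : theta1 tau (Cadd s (PI, 0)) = Copp (theta1 tau s).
Proof.
  rewrite !theta1_G by auto. fold T1.
  replace (Cadd (Cadd s (PI, 0)) hpi) with (Cadd (Cadd s hpi) (PI, 0)) by ceq.
  rewrite G_pi by auto. rewrite Cexp_pih. ring.
Qed.

Lemma th4_pi s : theta4 tau (Cadd s (PI, 0)) = theta4 tau s.
Proof.
  rewrite !theta4_G by auto. fold T1.
  replace (Cadd (Cadd s (PI, 0)) hpi) with (Cadd (Cadd s hpi) (PI, 0)) by ceq.
  rewrite G_pi by auto. rewrite Cexp_pi0. ring.
Qed.

Lemma arg_S s t : Cadd (Cadd s hpi) (Cadd t hpi) = Cadd (Cadd s t) (PI, 0).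
Proof. unfold hpi. ceqf. Qed.
Lemma arg_D s t : Csub (Cadd t hpi) (Cadd s hpi) = Csub t s.
Proof. unfold hpi. ceqf. Qed.

Lemma prod44 s t : Cmul (theta4 tau s) (theta4 tau t) =
  Csub (Cmul (G T2 0 (Cadd s t)) (G T2 0 (Csub t s)))
       (Cmul (G T2 (/2) (Cadd s t)) (G T2 (/2) (Csub t s))).
Proof.
  rewrite !theta4_G by auto. fold T1. rewrite shear by auto. fold T2.
  replace (0 + /2) with (/2) by ring.
  rewrite arg_S, arg_D, !G_pi by auto. rewrite Cexp_pi0, Cexp_pih. ring.
Qed.

Lemma prod11 s t : Cmul (theta1 tau s) (theta1 tau t) =
  Csub (Cmul (G T2 0 (Cadd s t)) (G T2 (/2) (Csub t s)))
       (Cmul (G T2 (/2) (Cadd s t)) (G T2 0 (Csub t s))).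
Proof.
  rewrite !theta1_G by auto. fold T1.
  replace (Cmul (Copp (G T1 (/ 2) (Cadd s hpi))) (Copp (G T1 (/ 2) (Cadd t hpi))))
    with (Cmul (G T1 (/ 2) (Cadd s hpi)) (G T1 (/ 2) (Cadd t hpi))) by ring.
  rewrite shear by auto. fold T2.
  replace (/2 + /2) with (0 + 1) by field. rewrite G_shift1 by auto.
  rewrite arg_S, arg_D, !G_pi by auto. rewrite Cexp_pi0, Cexp_pih. ring.
Qed.

Lemma add1 wv vv : Cmul (Cmul (theta1 tau (Csub wv vv)) (theta1 tau (Cadd wv vv)))
                      (Cmul (theta4 tau C0) (theta4 tau C0)) =
  Csub (Cmul (Cmul (theta1 tau wv) (theta1 tau wv)) (Cmul (theta4 tau vv) (theta4 tau vv)))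
       (Cmul (Cmul (theta4 tau wv) (theta4 tau wv)) (Cmul (theta1 tau vv) (theta1 tau vv))).
Proof.
  rewrite !prod11, !prod44.
  replace (Cadd (Csub wv vv) (Cadd wv vv)) with (Cadd wv wv) by ceq.
  replace (Csub (Cadd wv vv) (Csub wv vv)) with (Cadd vv vv) by ceq.
  replace (Csub wv wv) with C0 by ceq. replace (Csub vv vv) with C0 by ceq.
  replace (Cadd C0 C0) with C0 by ceq. replace (Csub C0 C0) with C0 by ceq.
  ring.
Qed.

Lemma add4 wv vv : Cmul (Cmul (theta4 tau (Csub wv vv)) (theta4 tau (Cadd wv vv)))
                      (Cmul (theta4 tau C0) (theta4 tau C0)) =
  Csub (Cmul (Cmul (theta4 tau wv) (theta4 tau wv)) (Cmul (theta4 tau vv) (theta4 tau vv)))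
       (Cmul (Cmul (theta1 tau wv) (theta1 tau wv)) (Cmul (theta1 tau vv) (theta1 tau vv))).
Proof.
  rewrite !prod11, !prod44.
  replace (Cadd (Csub wv vv) (Cadd wv vv)) with (Cadd wv wv) by ceq.
  replace (Csub (Cadd wv vv) (Csub wv vv)) with (Cadd vv vv) by ceq.
  replace (Csub wv wv) with C0 by ceq. replace (Csub vv vv) with C0 by ceq.
  replace (Cadd C0 C0) with C0 by ceq. replace (Csub C0 C0) with C0 by ceq.
  ring.
Qed.

End Th.

(** * local identities at eta = pi/3 *)
Section Loc.
Variable tau : Cplx.
Hypothesis Htau : 0 < snd tau.
Variables x u : Cplx.
Let e2 := eta2 eta_pi3.
Let Y := Csub x u.
Let Zz := Csub (Cadd x e2) u.
Let rho := Cmul (wr tau eta_pi3 Y) (wr tau eta_pi3 Zz).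

Lemma FZ : Cadd Y e2 = Zz. Proof. unfold Y, Zz, e2. ceq. Qed.
Lemma FZm : Csub Zz e2 = Y. Proof. unfold Y, Zz, e2. ceq. Qed.
Lemma FZe2 : Cadd Zz e2 = Cadd (Cadd Y eta_pi3) (PI, 0).
Proof. unfold Y, Zz, e2. ceqf. Qed.
Lemma FZe : Cadd Zz eta_pi3 = Cadd Y (PI, 0).
Proof. unfold Y, Zz, e2. ceqf. Qed.

Lemma I1 : Csub (Cmul (wa tau eta_pi3 Y) (wb tau eta_pi3 Zz)) (Cmul (wc tau eta_pi3 Y) (wc tau eta_pi3 Zz)) = rho.
Proof.
  pose proof (add1 tau Htau Zz e2) as A.
  unfold rho, wa, wb, wc, wr. fold e2. rewrite FZ.
  rewrite FZe2 in A |- *. rewrite FZm in A. rewrite FZe.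
  rewrite ?th1_pi, ?th4_pi in A by auto. rewrite ?th1_pi, ?th4_pi by auto.
  match type of A with _ = ?r =>
    transitivity (Cmul (Cmul (theta4 tau Y) (theta4 tau (Cadd Y eta_pi3))) r) end.
  ring. rewrite <- A. ring.
Qed.

Lemma I2 : Csub (Cmul (wa tau eta_pi3 Zz) (wb tau eta_pi3 Y)) (Cmul (wd tau eta_pi3 Y) (wd tau eta_pi3 Zz)) = rho.
Proof.
  pose proof (add4 tau Htau Zz e2) as A.
  unfold rho, wa, wb, wd, wr. fold e2. rewrite FZ.
  rewrite FZe2 in A |- *. rewrite FZm in A. rewrite FZe.
  rewrite ?th1_pi, ?th4_pi in A by auto. rewrite ?th1_pi, ?th4_pi by auto.
  match type of A with _ = ?r =>
    transitivity (Cmul (Cmul (theta1 tau Y) (Copp (theta1 tau (Cadd Y eta_pi3)))) r) end.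
  ring. rewrite <- A. ring.
Qed.

End Loc.

Definition M2 tau x u c b s1 s2 t1 t2 :=
  mono tau eta_pi3 u [x; Cadd x (eta2 eta_pi3)] c b [s1; s2] [t1; t2].

Lemma local tau (Htau : 0 < snd tau) x u c b s1 s2 :
  Cadd (Cmul (M2 tau x u c b s1 s2 false true) Defs.C1) (Cmul (M2 tau x u c b s1 s2 true false) (Copp Defs.C1)) =
  if Bool.eqb c b then Cmul (Cmul (wr tau eta_pi3 (Csub x u)) (wr tau eta_pi3 (Csub (Cadd x (eta2 eta_pi3)) u))) (singlet s1 s2) else C0.
Proof.
  pose proof (I1 tau Htau x u) as J1. pose proof (I2 tau Htau x u) as J2.
  pose proof (FZ x u) as F. cbv zeta in J1, J2, F.
  unfold M2.
  destruct c, b, s1, s2; cbn [mono Bool.eqb singlet]; unfold Rent; cbn [Bool.eqb andb negb];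
  first [ ring | (rewrite <- J1; ring) | (rewrite <- J2; ring)
        | (unfold wa, wb, wc, wd; rewrite F; ring) ].
Qed.

(** * finite sums over configurations *)
Lemma Cadd_0_r z : Cadd z C0 = z.
Proof. destruct z; ceq. Qed.

Lemma Csum_add {A} (f g : A -> Cplx) l :
  Csum (map (fun t => Cadd (f t) (g t)) l) = Cadd (Csum (map f l)) (Csum (map g l)).
Proof. induction l; simpl. ceq. unfold Csum in *; simpl. rewrite IHl. ring. Qed.

Lemma Csum_scal {A} c (f : A -> Cplx) l :
  Csum (map (fun t => Cmul c (f t)) l) = Cmul c (Csum (map f l)).
Proof. induction l; simpl. unfold Csum; simpl. ceq. unfold Csum in *; simpl. rewrite IHl. ring. Qed.

Lemma Csum_ext_in {A} (f g : A -> Cplx) l :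
  (forall t, In t l -> f t = g t) -> Csum (map f l) = Csum (map g l).
Proof.
  induction l; intros H; simpl; auto. unfold Csum in *; simpl.
  rewrite H by (left; auto). rewrite IHl; auto. intros t Ht; apply H; right; auto.
Qed.

Lemma Csum_swap {A B} (f : A -> B -> Cplx) l1 l2 :
  Csum (map (fun a => Csum (map (fun b => f a b) l2)) l1) =
  Csum (map (fun b => Csum (map (fun a => f a b) l1)) l2).
Proof.
  induction l1; simpl.
  - induction l2; simpl; auto. unfold Csum in *; simpl. rewrite <- IHl2. ceq.
  - unfold Csum at 1; simpl. fold (Csum (map (fun a0 => Csum (map (fun b => f a0 b) l2)) l1)).
    rewrite IHl1. rewrite <- Csum_add. reflexivity.
Qed.

Lemma configs_S (f : list bool -> Cplx) n :
  Csum (map f (configs (S n))) = Csum (map (fun c => Cadd (f (false :: c)) (f (true :: c))) (configs n)).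
Proof.
  simpl. induction (configs n); simpl; auto. unfold Csum in *; simpl. rewrite IHl. ring.
Qed.

Lemma configs_len n c : In c (configs n) -> length c = n.
Proof.
  revert c. induction n; simpl; intros c H.
  - destruct H as [H|[]]; subst; auto.
  - apply in_flat_map in H. destruct H as [c' [H1 H2]].
    destruct H2 as [H2|[H2|[]]]; subst; simpl; f_equal; auto.
Qed.

Lemma configs_split (f : list bool -> Cplx) n m :
  Csum (map f (configs (n + m))) =
  Csum (map (fun c1 => Csum (map (fun c2 => f (c1 ++ c2)) (configs m))) (configs n)).
Proof.
  revert f. induction n; intros f.
  - simpl. unfold Csum; simpl. rewrite Cadd_0_r. reflexivity.
  - change (S n + m)%nat with (S (n + m)). rewrite configs_S, IHn, configs_S.
    apply f_equal. apply map_ext. intros c1. rewrite <- Csum_add. reflexivity.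
Qed.

Lemma mono_app tau eta u xs1 xs2 a' a sg1 sg2 ta1 ta2 :
  length xs1 = length sg1 -> length sg1 = length ta1 ->
  mono tau eta u (xs1 ++ xs2) a' a (sg1 ++ sg2) (ta1 ++ ta2) =
  Cadd (Cmul (mono tau eta u xs2 a' false sg2 ta2) (mono tau eta u xs1 false a sg1 ta1))
       (Cmul (mono tau eta u xs2 a' true sg2 ta2) (mono tau eta u xs1 true a sg1 ta1)).
Proof.
  revert a sg1 ta1. induction xs1 as [|y ys IH]; intros a sg1 ta1 H1 H2.
  - destruct sg1; [|discriminate]. destruct ta1; [|discriminate]. simpl.
    destruct a; simpl; ring.
  - destruct sg1 as [|s sg1]; [discriminate|]. destruct ta1 as [|t ta1]; [discriminate|].
    simpl in H1, H2. injection H1 as H1. injection H2 as H2.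
    simpl. rewrite !IH by auto. ring.
Qed.

Lemma mono_cons2 tau u x xp xq a' a p q ta1 ta2 s1 s2 t1 t2 :
  length xp = length p -> length p = length ta1 ->
  mono tau eta_pi3 u (xp ++ x :: Cadd x (eta2 eta_pi3) :: xq) a' a (p ++ s1 :: s2 :: q) (ta1 ++ t1 :: t2 :: ta2) =
  Cadd (Cmul (Cadd (Cmul (mono tau eta_pi3 u xq a' false q ta2) (M2 tau x u false false s1 s2 t1 t2))
                   (Cmul (mono tau eta_pi3 u xq a' true q ta2) (M2 tau x u true false s1 s2 t1 t2)))
             (mono tau eta_pi3 u xp false a p ta1))
       (Cmul (Cadd (Cmul (mono tau eta_pi3 u xq a' false q ta2) (M2 tau x u false true s1 s2 t1 t2))
                   (Cmul (mono tau eta_pi3 u xq a' true q ta2) (M2 tau x u true true s1 s2 t1 t2)))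
             (mono tau eta_pi3 u xp true a p ta1)).
Proof.
  intros H1 H2. rewrite mono_app by auto.
  change (x :: Cadd x (eta2 eta_pi3) :: xq) with ([x; Cadd x (eta2 eta_pi3)] ++ xq).
  change (s1 :: s2 :: q) with ([s1; s2] ++ q). change (t1 :: t2 :: ta2) with ([t1; t2] ++ ta2).
  rewrite !mono_app by reflexivity. unfold M2. reflexivity.
Qed.

Lemma ins_val i v p q s1 s2 : (1 <= i)%nat -> length p = (i - 1)%nat ->
  ins_singlet i v (p ++ s1 :: s2 :: q) = Cmul (v (p ++ q)) (singlet s1 s2).
Proof.
  intros Hi Hp. unfold ins_singlet.
  rewrite firstn_app, Hp, Nat.sub_diag, firstn_O, app_nil_r, <- Hp, firstn_all.
  rewrite skipn_app. replace (i + 1 - length p)%nat with 2%nat by lia.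
  rewrite skipn_all2 by lia. simpl. f_equal. f_equal.
  - rewrite app_nth2 by lia. match goal with |- nth ?k _ _ = _ => replace k with 0%nat by lia end. reflexivity.
  - rewrite app_nth2 by lia. match goal with |- nth ?k _ _ = _ => replace k with 1%nat by lia end. reflexivity.
Qed.

Lemma loc_solve a b r : Cadd (Cmul a Defs.C1) (Cmul b (Copp Defs.C1)) = r -> a = Cadd r b.
Proof. intros H. rewrite <- H. ring. Qed.

Lemma inner tau (Htau : 0 < snd tau) x u xp xq p q s1 s2 i v ta1 ta2 :
  (1 <= i)%nat -> length xp = (i - 1)%nat -> length p = (i - 1)%nat -> length ta1 = (i - 1)%nat ->
  Csum (map (fun c => Cmul (Tent tau eta_pi3 u (xp ++ [x; Cadd x (eta2 eta_pi3)] ++ xq) (p ++ s1 :: s2 :: q) (ta1 ++ (c ++ ta2)))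
                           (ins_singlet i v (ta1 ++ (c ++ ta2)))) (configs 2)) =
  Cmul (Cmul (Cmul (wr tau eta_pi3 (Csub x u)) (wr tau eta_pi3 (Csub (Cadd x (eta2 eta_pi3)) u))) (singlet s1 s2))
       (Cmul (Tent tau eta_pi3 u (xp ++ xq) (p ++ q) (ta1 ++ ta2)) (v (ta1 ++ ta2))).
Proof.
  intros Hi H1 H2 H3.
  pose proof (loc_solve _ _ _ (local tau Htau x u false false s1 s2)) as Lff.
  pose proof (loc_solve _ _ _ (local tau Htau x u false true s1 s2)) as Lft.
  pose proof (loc_solve _ _ _ (local tau Htau x u true false s1 s2)) as Ltf.
  pose proof (loc_solve _ _ _ (local tau Htau x u true true s1 s2)) as Ltt.
  cbn [Bool.eqb] in Lff, Lft, Ltf, Ltt.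
  cbn [configs flat_map app map]. unfold Csum. cbn [fold_right].
  rewrite !ins_val by lia. cbn [singlet].
  unfold Tent. rewrite !mono_cons2 by lia. rewrite !mono_app by lia.
  rewrite Lff, Lft, Ltf, Ltt. ring.
Qed.

Lemma skipn_nth {A} (d : A) k l : (k < length l)%nat -> skipn k l = nth k l d :: skipn (S k) l.
Proof.
  revert l. induction k; intros l H; destruct l; simpl in *; try lia; auto.
  apply IHk. lia.
Qed.

Lemma split_sg (sg : list bool) i L : length sg = L -> (1 <= i)%nat -> (i <= L - 1)%nat ->
  exists p s1 s2 q, sg = p ++ s1 :: s2 :: q /\ length p = (i - 1)%nat.
Proof.
  intros HL H1 H2. exists (firstn (i - 1) sg), (nth (i - 1) sg false), (nth i sg false), (skipn (i + 1) sg).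
  split.
  - rewrite <- (firstn_skipn (i - 1) sg) at 1. f_equal.
    rewrite (skipn_nth false) by lia. f_equal. replace (S (i - 1)) with i by lia.
    rewrite (skipn_nth false) by lia. f_equal. f_equal. lia.
  - rewrite length_firstn. lia.
Qed.

Lemma insert_pair_eq i x y xp xq : length xp = (i - 1)%nat ->
  insert_pair i x y (xp ++ xq) = xp ++ [x; y] ++ xq.
Proof.
  intros H. unfold insert_pair. rewrite firstn_app, H, Nat.sub_diag, firstn_O, app_nil_r.
  rewrite <- H, firstn_all. rewrite skipn_app, skipn_all, Nat.sub_diag, skipn_O. reflexivity.
Qed.

Theorem mainTheorem8 (tau : Cplx) (Htau : 0 < Cim tau)
  (L i : nat) (HL : (3 <= L)%nat) (Hi1 : (1 <= i)%nat) (Hi2 : (i <= L - 1)%nat)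
  (u x : Cplx) (xs : list Cplx) (Hxs : length xs = (L - 2)%nat)
  (v : list bool -> Cplx) (sg : list bool) (Hsg : length sg = L) :
  Tapply tau eta_pi3 L u (insert_pair i x (Cadd x (eta2 eta_pi3)) xs) (ins_singlet i v) sg =
  Cmul (Cmul (wr tau eta_pi3 (Csub x u)) (wr tau eta_pi3 (Csub (Cadd x (eta2 eta_pi3)) u)))
       (ins_singlet i (Tapply tau eta_pi3 (L - 2) u xs v) sg).
Proof.
  unfold Cim in Htau.
  destruct (split_sg sg i L Hsg Hi1 Hi2) as [p [s1 [s2 [q [Esg Hp]]]]]. subst sg.
  assert (Exs : xs = firstn (i - 1) xs ++ skipn (i - 1) xs) by (symmetry; apply firstn_skipn).
  assert (Hxp : length (firstn (i - 1) xs) = (i - 1)%nat) by (rewrite length_firstn; lia).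
  revert Exs Hxp. generalize (firstn (i - 1) xs) (skipn (i - 1) xs). intros xp xq Exs Hxp. subst xs.
  rewrite insert_pair_eq by auto.
  rewrite ins_val by auto.
  set (rho := Cmul (wr tau eta_pi3 (Csub x u)) (wr tau eta_pi3 (Csub (Cadd x (eta2 eta_pi3)) u))).
  set (m := (L - i - 1)%nat).
  unfold Tapply.
  replace L with (i - 1 + (2 + m))%nat at 1 by (unfold m; lia).
  replace (L - 2)%nat with (i - 1 + m)%nat by (unfold m; lia).
  rewrite !configs_split.
  set (Gf := fun ta => Cmul (Tent tau eta_pi3 u (xp ++ xq) (p ++ q) ta) (v ta)).
  set (K := Cmul rho (singlet s1 s2)).
  transitivity (Csum (map (fun c1 => Csum (map (fun c2 => Cmul K (Gf (c1 ++ c2))) (configs m))) (configs (i - 1)))).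
  - apply Csum_ext_in. intros ta1 Hta1. apply configs_len in Hta1.
    rewrite (configs_split (fun c2 => Cmul (Tent tau eta_pi3 u (xp ++ [x; Cadd x (eta2 eta_pi3)] ++ xq) (p ++ s1 :: s2 :: q) (ta1 ++ c2))
                               (ins_singlet i v (ta1 ++ c2))) 2 m).
    rewrite Csum_swap.
    apply Csum_ext_in. intros ta2 Hta2.
    unfold K, Gf, rho. apply inner; auto.
  - assert (E : forall c1, Csum (map (fun c2 => Cmul K (Gf (c1 ++ c2))) (configs m)) =
                          Cmul K (Csum (map (fun c2 => Gf (c1 ++ c2)) (configs m))))
      by (intros; apply Csum_scal).
    rewrite (map_ext _ _ E). rewrite Csum_scal. unfold K, Gf. cbv beta. ring.
Qed.
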